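(* Let $A\in\mathbb{R}^{n\times n}$ be symmetric of rank $r\ge 1$, written as $A=Q\Lambda Q^\top=\sum_{i=1}^r\lambda_i\vec{q}_i\vec{q}_i^\top$, where $Q=[\vec{q}_1\ \cdots\ \vec{q}_r]\in\mathbb{R}^{n\times r}$ has orthonormal columns that are eigenvectors of $A$ for its nonzero eigenvalues and $\Lambda=\mathrm{Diag}(\lambda_1,\dots,\lambda_r)$ is the diagonal matrix of these nonzero eigenvalues. Let $\bar{Q}=[\bar{\vec{q}}_{r+1}\ \cdots\ \bar{\vec{q}}_n]$ have orthonormal columns spanning the null space of $A$, and let $\vec{x}_0=Q\nu+\bar{Q}\mu$ with $\nu\in\mathbb{R}^r$, $\nu\neq 0$, $\mu\in\mathbb{R}^{n-r}$. Let $\vec{x}_{t+1}=A\vec{x}_t$, $X_j=[\vec{x}_0\ \cdots\ \vec{x}_j]$, $Y_j=[\vec{x}_1\ \cdots\ \vec{x}_{j+1}]$, $\hat{A}_j=Y_jX_j^{\dagger}$. Let $1\le k<n$, let $U_{k-1}$ be the matrix of left singular vectors of $X_{k-1}$ corresponding to its nonzero singular values, and $S_k=I-U_{k-1}U_{k-1}^\top$. Assume $\|S_kQ\Lambda^k\nu\|\neq 0$. Then $$A-\hat{A}_k=A\left(I-\frac{S_kQ\Lambda^k\nu\nu^\top\Lambda^kQ^\top}{\|S_kQ\Lambda^k\nu\|^2}\right)S_k .$$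
   Context: $M^{\dagger}$ is the Moore–Penrose pseudo-inverse; $\|\cdot\|$ on vectors is the Euclidean norm. $S_k$ is the orthogonal projection onto the orthogonal complement of the range of $X_{k-1}$. *)

(* Defs.v *)
From HB Require Import structures.
From mathcomp Require Import all_boot all_order all_algebra.
From mathcomp Require Import boolp classical_sets.
From mathcomp Require Import reals.
Set Implicit Arguments. Unset Strict Implicit. Unset Printing Implicit Defensive.
Import Order.TTheory GRing.Theory Num.Theory.
Local Open Scope ring_scope.
Local Open Scope classical_set_scope.

Section Defs.
Variable R : realType.

Definition is_pinv m n (X : 'M[R]_(m, n)) (P : 'M[R]_(n, m)) : Prop :=
  [/\ X *m P *m X = X, P *m X *m P = P,
      (X *m P)^T = X *m P & (P *m X)^T = P *m X].

Definition pinv m n (X : 'M[R]_(m, n)) : 'M[R]_(n, m) :=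
  xget 0 [set P | is_pinv X P].

(* P is the orthogonal projection of R^m onto the orthogonal complement of
   the column space (range) of X : the column space of P (= row space of P^T)
   is {v | v^T X = 0}, i.e. kermx X. *)
Definition is_orth_proj_compl m n (X : 'M[R]_(m, n)) (P : 'M[R]_m) : Prop :=
  [/\ P^T = P, P *m P = P & (P^T == kermx X)%MS].

Definition orth_proj_compl m n (X : 'M[R]_(m, n)) : 'M[R]_m :=
  xget 0 [set P | is_orth_proj_compl X P].

Definition vnorm m (v : 'cV[R]_m) : R := Num.sqrt (\sum_i v i 0 ^+ 2).

Definition iter_x n (A : 'M[R]_n) (x0 : 'cV[R]_n) (t : nat) : 'cV[R]_n :=
  iter t (fun x => A *m x) x0.

Definition Xmat n (A : 'M[R]_n) (x0 : 'cV[R]_n) (j : nat) : 'M[R]_(n, j.+1) :=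
  \matrix_(i < n, t < j.+1) iter_x A x0 t i 0.

Definition Ymat n (A : 'M[R]_n) (x0 : 'cV[R]_n) (j : nat) : 'M[R]_(n, j.+1) :=
  \matrix_(i < n, t < j.+1) iter_x A x0 t.+1 i 0.

Definition Ahat n (A : 'M[R]_n) (x0 : 'cV[R]_n) (j : nat) : 'M[R]_n :=
  Ymat A x0 j *m pinv (Xmat A x0 j).

End Defs.

(* Main.v *)
Require Import Defs.
From HB Require Import structures.
From mathcomp Require Import all_boot all_order all_algebra.
From mathcomp Require Import boolp classical_sets reals.
Import Order.TTheory GRing.Theory Num.Theory.
Local Open Scope ring_scope.

Lemma rv_sqr_eq0 {R : realType} m (v : 'rV[R]_m) : v *m v^T = 0 -> v = 0.
Proof.
move=> /matrixP /(_ 0 0); rewrite !mxE => h.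
have: \sum_j v 0 j ^+ 2 = 0.
  by rewrite -[RHS]h; apply: eq_bigr => j _; rewrite !mxE expr2.
move/eqP; rewrite psumr_eq0; last by move=> j _; rewrite sqr_ge0.
move/allP => H; apply/matrixP => i j; rewrite (ord1 i) mxE.
by have /implyP := H j (mem_index_enum _); rewrite sqrf_eq0 => /(_ isT)/eqP.
Qed.

Lemma unit_BBt {R : realType} k m (B : 'M[R]_(k, m)) :
  row_free B -> B *m B^T \in unitmx.
Proof.
move=> fB; rewrite -row_free_unit -kermx_eq0; apply/eqP/row_matrixP => i.
rewrite row0; set u := row i _.
have h : u *m (B *m B^T) = 0 by rewrite /u -row_mul mulmx_ker row0.
have : (u *m B) *m (u *m B)^T = 0.
  by rewrite trmx_mul ?mulmxA -(mulmxA u) h mul0mx.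
by move/rv_sqr_eq0/eqP; rewrite mulmx_free_eq0 // => /eqP.
Qed.

Lemma pinv_exists {R : realType} m p (X : 'M[R]_(m, p)) :
  exists P, is_pinv X P.
Proof.
set C := col_base X; set F := row_base X.
have fF : row_free F by exact: row_base_free.
have fC : row_free C^T.
  by rewrite /row_free mxrank_tr; have := col_base_full X; rewrite /row_full.
have uF := @unit_BBt _ _ _ _ fF.
have uC := @unit_BBt _ _ _ _ fC; rewrite trmxK in uC.
set a := invmx (F *m F^T); set b := invmx (C^T *m C).
have ta : a^T = a by rewrite /a trmx_inv trmx_mul trmxK.
have tb : b^T = b by rewrite /b trmx_inv trmx_mul trmxK.
have eX : X = C *m F by rewrite mulmx_base.
clearbody C F.
have eXl : forall q (M : 'M_(p, q)), X *m M = C *m F *m M by move=> q M; rewrite -eX.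
have eXr : forall q (M : 'M_(q, m)), M *m X = M *m C *m F by move=> q M; rewrite -mulmxA -eX.
exists (F^T *m a *m b *m C^T).
have XG : X *m (F^T *m a *m b *m C^T) = C *m b *m C^T.
  rewrite eXl ?mulmxA -(mulmxA C F F^T) -(mulmxA C (F *m F^T) a) mulmxV //.
  by rewrite mulmx1.
have GX : (F^T *m a *m b *m C^T) *m X = F^T *m a *m F.
  rewrite eXr ?mulmxA -(mulmxA _ C^T C) -(mulmxA _ b) mulVmx // mulmx1.
  done.
split.
- rewrite XG eXr ?mulmxA -(mulmxA _ C^T C) -(mulmxA C b) mulVmx // mulmx1 //.
- rewrite -mulmxA XG ?mulmxA -(mulmxA _ C^T C) -(mulmxA _ (C^T *m C) b) mulmxV // mulmx1 //.
- by rewrite XG !trmx_mul trmxK tb mulmxA.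
- by rewrite GX !trmx_mul trmxK ta mulmxA.
Qed.

Lemma trmx_expr {R : realType} r (B : 'M[R]_r) t : (B ^+ t)^T = B^T ^+ t.
Proof.
elim: t => [|t IH]; first by rewrite !expr0 trmx1.
by rewrite exprS exprSr -!mulmxE trmx_mul IH.
Qed.

Lemma trmx_1B {R : realType} m (E : 'M[R]_m) : (1%:M - E)^T = 1%:M - E^T.
Proof. by rewrite linearB /= trmx1. Qed.

Lemma proj_unique {R : realType} m p (X : 'M[R]_(m, p)) (G : 'M[R]_(p, m))
  (F : 'M[R]_m) :
  X *m G *m X = X -> (X *m G)^T = X *m G -> F^T = F -> F *m X = 0 ->
  (forall B : 'M[R]_m, B *m X = 0 -> B *m F = B) -> F = 1%:M - X *m G.
Proof.
move=> h1 h2 h3 h4 h5.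
have e1 : F *m (1%:M - X *m G) = F.
  by rewrite mulmxBr mulmx1 mulmxA h4 mul0mx subr0.
have e2 : (1%:M - X *m G) *m F = 1%:M - X *m G.
  by apply: h5; rewrite mulmxBl mul1mx h1 subrr.
have := congr1 trmx e2; rewrite trmx_mul h3 trmx_1B h2 e1 => ->.
by [].
Qed.

Lemma orth_exists {R : realType} m p (M : 'M[R]_(m, p)) :
  exists P, is_orth_proj_compl M P.
Proof.
have [G [g1 g2 g3 g4]] := pinv_exists _ _ M.
exists (1%:M - M *m G).
have sK : (kermx M *m (M *m G) = 0) by rewrite mulmxA mulmx_ker mul0mx.
split.
- by rewrite trmx_1B g3.
- rewrite mulmxBl mul1mx mulmxBr mulmx1 mulmxA g1 subrr subr0 //.
- rewrite trmx_1B g3; apply/andP; split.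
  + by apply/sub_kermxP; rewrite mulmxBl mul1mx g1 subrr.
  + have <- : kermx M *m (1%:M - M *m G) = kermx M.
      by rewrite mulmxBr mulmx1 sK subr0.
    exact: submxMl.
Qed.

Lemma orthP {R : realType} m p (M : 'M[R]_(m, p)) :
  let S := orth_proj_compl M in
  [/\ S^T = S, S *m S = S, S *m M = 0 &
      forall q (B : 'M[R]_(q, m)), B *m M = 0 -> B *m S = B].
Proof.
move=> S.
have [h1 h2 /andP[h3 h4]] : is_orth_proj_compl M S by apply: xgetPex; exact: orth_exists.
split => //.
- by move/sub_kermxP: h3; rewrite h1.
- move=> q B /sub_kermxP hB.
  have := submx_trans hB h4; rewrite h1 => /submxP [D ->].
  by rewrite -mulmxA h2.
Qed.

Lemma mulX0 {R : realType} n (A : 'M[R]_n) x0 q (B : 'M[R]_(q, n)) t :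
  B *m Xmat A x0 t = 0 <-> forall j, (j <= t)%N -> B *m iter_x A x0 j = 0.
Proof.
split.
- move=> h j jt; apply/matrixP => i l; rewrite (ord1 l).
  have := congr1 (fun M : 'M[R]_(q, t.+1) => M i (Ordinal (jt : (j < t.+1)%N))) h.
  rewrite !mxE => e; rewrite -[RHS]e; apply: eq_bigr => s _; rewrite !mxE //.
- move=> h; apply/matrixP => i j.
  have := congr1 (fun M : 'M[R]_(q, 1) => M i 0) (h j (ltn_ord j)).
  rewrite !mxE => e; rewrite -[RHS]e; apply: eq_bigr => s _; rewrite !mxE //.
Qed.

Lemma Ymat_eq {R : realType} n (A : 'M[R]_n) x0 t :
  Ymat A x0 t = A *m Xmat A x0 t.
Proof.
apply/matrixP => i j; rewrite !mxE; apply: eq_bigr => s _; rewrite !mxE //.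
Qed.

Theorem lemma1 (R : realType) (n r k : nat) (A : 'M[R]_n)
  (Q : 'M[R]_(n, r)) (lam : 'rV[R]_r) (Qbar : 'M[R]_(n, n - r))
  (nu : 'cV[R]_r) (mu : 'cV[R]_(n - r)) (x0 : 'cV[R]_n) :
  A^T = A ->
  \rank A = r -> (1 <= r)%N ->
  Q^T *m Q = 1%:M ->
  (forall i : 'I_r, lam 0 i != 0) ->
  (forall i : 'I_r, A *m col i Q = lam 0 i *: col i Q) ->
  A = Q *m diag_mx lam *m Q^T ->
  Qbar^T *m Qbar = 1%:M ->
  (Qbar^T == kermx A^T)%MS ->
  x0 = Q *m nu + Qbar *m mu ->
  nu != 0 ->
  (1 <= k)%N -> (k < n)%N ->
  let S := orth_proj_compl (Xmat A x0 k.-1) in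
  let w := S *m Q *m diag_mx lam ^+ k *m nu in
  vnorm w != 0 ->
  A - Ahat A x0 k =
  A *m (1%:M - (vnorm w ^+ 2)^-1 *:
          (w *m nu^T *m diag_mx lam ^+ k *m Q^T)) *m S.
Proof.
move=> sA _ _ QtQ _ _ Adef _ kerQb x0def _.
case: k => [//|k] _ _ /=.
set M := Xmat A x0 k; set X := Xmat A x0 k.+1.
set S := orth_proj_compl M.
set w := S *m Q *m diag_mx lam ^+ k.+1 *m nu.
move=> wn0.
have [S1 S2 S3 S4] := orthP _ _ M; rewrite -/S in S1 S2 S3 S4.
have [g1 g2 g3 g4] : is_pinv X (pinv X) by apply: xgetPex; exact: pinv_exists.
set G := pinv X in g1 g2 g3 g4 *.
have AQ : A *m Q = Q *m diag_mx lam.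
  by rewrite {1}Adef -!mulmxA QtQ mulmx1.
have AQb : A *m Qbar = 0.
  move/andP: kerQb => [/sub_kermxP h _].
  by have := congr1 trmx h; rewrite trmx_mul !trmxK trmx0.
have xk_eq : forall t, iter_x A x0 t.+1 = Q *m diag_mx lam ^+ t.+1 *m nu.
  elim=> [|t IH].
    rewrite /iter_x /= x0def mulmxDr !mulmxA AQ AQb mul0mx addr0 expr1 //.
  have -> : iter_x A x0 t.+2 = A *m iter_x A x0 t.+1 by [].
  rewrite IH !mulmxA AQ; congr (_ *m _); rewrite -mulmxA; congr (_ *m _).
set xk := iter_x A x0 k.+1.
have exk : iter_x A x0 k.+1 = xk by [].
have xkE : xk = Q *m diag_mx lam ^+ k.+1 *m nu by rewrite /xk xk_eq.
clearbody xk.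
have wE : w = S *m xk by rewrite xkE /w !mulmxA.
clearbody w.
have trL : (diag_mx lam ^+ k.+1)^T = diag_mx lam ^+ k.+1.
  by rewrite trmx_expr tr_diag_mx.
have xkT : nu^T *m diag_mx lam ^+ k.+1 *m Q^T = xk^T.
  by rewrite xkE !trmx_mul trL mulmxA.
have wT : xk^T *m S = w^T by rewrite wE [RHS]trmx_mul S1.
set v := vnorm w ^+ 2.
have v0 : v != 0 by rewrite /v expf_neq0.
have wtw : w^T *m w = v%:M.
  apply/matrixP => i j; rewrite (ord1 i) (ord1 j) !mxE eqxx mulr1n.
  rewrite /v /vnorm sqr_sqrtr; last by apply: sumr_ge0 => l _; rewrite sqr_ge0.
  by apply: eq_bigr => l _; rewrite !mxE expr2.
have wtxk : w^T *m xk = v%:M.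
  have Sw : S *m w = w by rewrite wE mulmxA S2.
  have wS : w^T *m S = w^T by rewrite -{1}S1 -trmx_mul Sw.
  by rewrite -wtw {3}wE mulmxA wS.
set F := S - v^-1 *: (w *m w^T).
have FE : F = 1%:M - X *m G.
  apply: proj_unique => //.
  - by rewrite /F linearB /= linearZ /= trmx_mul trmxK S1.
  - apply/mulX0 => j jk.
    have Sj : forall j, (j <= k)%N -> S *m iter_x A x0 j = 0.
      by apply/mulX0.
    rewrite /F mulmxBl -scalemxAl -mulmxA.
    rewrite leq_eqVlt in jk; case/orP: jk => [/eqP ->|jk].
      rewrite exk wtxk -wE mul_mx_scalar scalerA mulVf // scale1r subrr //.
    by rewrite Sj // -wT -(mulmxA xk^T) Sj // !mulmx0 scaler0 subrr.
  - move=> B /mulX0 hB.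
    have BM : B *m M = 0 by apply/mulX0 => j jk; apply: hB; exact: leqW.
    have Bw : B *m w = 0 by rewrite wE mulmxA S4 // -exk hB.
    by rewrite /F mulmxBr S4 // -scalemxAr mulmxA Bw mul0mx scaler0 subr0.
rewrite /Ahat Ymat_eq -/X -/G -mulmxA -{1}(mulmx1 A) -mulmxBr -FE.
have -> : w *m nu^T *m diag_mx lam ^+ k.+1 *m Q^T = w *m xk^T.
  by rewrite -xkT !mulmxA.
rewrite -mulmxA mulmxBl mul1mx -scalemxAl -mulmxA wT //.
Qed.
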